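(* Let $(G_i)_{i\in I}$ be an at most countable family of Polish groups and $G=\prod_iG_i$. Then $G$ has ample generics if and only if each $G_i$ has ample generics. Likewise, if $(G_i,\tau_i,\partial_i)_{i\in I}$ is an at most countable family of Polish topometric groups and $G=\prod_iG_i$ is endowed with the product topology $\tau$ and the metric $\partial((g_i),(h_i))=\sup_{i\in I}\partial_i(g_i,h_i)$, then $(G,\tau,\partial)$ has ample generics if and only if $(G_i,\tau_i,\partial_i)$ has ample generics for every $i$.
   Context: A Polish group $K$ has ample generics if for every $n$ there is $\bar g\in K^n$ whose diagonal conjugacy class $\{(kg_0k^{-1},\dots,kg_{n-1}k^{-1})\colon k\in K\}$ is co-meagre in $K^n$. A Polish topometric group is a triple $(G,\tau,\partial)$ with $(G,\tau)$ a Polish group, $\partial$ a bi-invariant metric whose topology refines $\tau$ and which is $\tau$-lower semi-continuous. It has ample generics if for every $n$ and $\varepsilon>0$ there is $\bar g\in G^n$ whose diagonal conjugacy class $C$ satisfies that $(C)_\varepsilon=\{\bar h\colon\partial(\bar h,C)<\varepsilon\}$ is co-meagre in $G^n$, where $G^n$ has the product topology and supremum metric. *)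

(* Defs.v *)
From HB Require Import structures.
From mathcomp Require Import all_boot all_order all_algebra.
From mathcomp Require Import all_classical all_reals all_analysis.
From mathcomp Require Import Rstruct.
Set Implicit Arguments. Unset Strict Implicit. Unset Printing Implicit Defensive.
Import Order.TTheory GRing.Theory Num.Theory.
Local Open Scope classical_set_scope.
Local Open Scope ring_scope.

Definition R := Rdefinitions.R.

Definition nowhere_dense {T : topologicalType} (A : set T) :=
  interior (closure A) = set0.

Definition meager {T : topologicalType} (A : set T) :=
  exists F : nat -> set T, (forall n, nowhere_dense (F n)) /\ A `<=` \bigcup_n F n.

Definition comeager {T : topologicalType} (A : set T) := meager (~` A).

Definition separable_space (T : topologicalType) :=
  exists D : set T, countable D /\ dense D.

Definition is_metric {T : Type} (d : T -> T -> R) :=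
  [/\ forall x y, 0 <= d x y,
      forall x y, d x y = 0 <-> x = y,
      forall x y, d x y = d y x &
      forall x y z, d x z <= d x y + d y z].

Definition metric_compatible {T : topologicalType} (d : T -> T -> R) :=
  forall A : set T, open A <->
    (forall x, A x -> exists e : R, 0 < e /\ [set y | d x y < e] `<=` A).

Definition metric_complete {T : topologicalType} (d : T -> T -> R) :=
  forall u : nat -> T,
    (forall e : R, 0 < e -> exists N : nat, forall m n : nat,
        (N <= m)%N -> (N <= n)%N -> d (u m) (u n) < e) ->
    exists x : T, u @ \oo --> x.

Definition completely_metrizable (T : topologicalType) :=
  exists d : T -> T -> R, [/\ is_metric d, metric_compatible d & metric_complete d].

Definition polish_space (T : topologicalType) :=
  separable_space T /\ completely_metrizable T.

Record group_ops (T : Type) := GroupOps {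
  gmul : T -> T -> T;
  gone : T;
  ginv : T -> T }.

Definition group_axioms {T : Type} (G : group_ops T) :=
  [/\ forall x y z, gmul G x (gmul G y z) = gmul G (gmul G x y) z,
      forall x, gmul G (gone G) x = x,
      forall x, gmul G x (gone G) = x,
      forall x, gmul G (ginv G x) x = gone G &
      forall x, gmul G x (ginv G x) = gone G].

Definition topological_group {T : topologicalType} (G : group_ops T) :=
  group_axioms G /\
  continuous (fun p : T * T => gmul G p.1 p.2) /\ continuous (ginv G).

Definition polish_group {T : topologicalType} (G : group_ops T) :=
  topological_group G /\ polish_space T.

Definition conj_by {T : Type} (G : group_ops T) (k g : T) :=
  gmul G (gmul G k g) (ginv G k).

Definition prod_group_ops {I : Type} {T : I -> Type} (G : forall i, group_ops (T i)) :
  group_ops (prod_topology T) :=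
  GroupOps (fun x y i => gmul (G i) (x i) (y i)) (fun i => gone (G i))
           (fun x i => ginv (G i) (x i)).

Definition power_space (T : topologicalType) (n : nat) : topologicalType :=
  prod_topology (fun _ : 'I_n => T).

Definition diag_conj_class {T : topologicalType} (G : group_ops T) (n : nat)
  (g : power_space T n) : set (power_space T n) :=
  [set h | exists k : T, h = (fun i => conj_by G k (g i))].

Definition ample_generics {T : topologicalType} (G : group_ops T) :=
  forall n : nat, exists g : power_space T n, comeager (diag_conj_class G g).

Local Open Scope ereal_scope.

Definition is_emetric {T : Type} (d : T -> T -> \bar R) :=
  [/\ forall x y, 0 <= d x y,
      forall x y, d x y = 0 <-> x = y,
      forall x y, d x y = d y x &
      forall x y z, d x z <= d x y + d y z].

Definition bi_invariant {T : Type} (G : group_ops T) (d : T -> T -> \bar R) :=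
  forall k x y, d (gmul G k x) (gmul G k y) = d x y /\
                d (gmul G x k) (gmul G y k) = d x y.

Definition metric_refines {T : topologicalType} (d : T -> T -> \bar R) :=
  forall A : set T, open A ->
    forall x, A x -> exists e : R, (0 < e)%R /\ [set y | d x y < e%:E] `<=` A.

Definition lsc_metric {T : topologicalType} (d : T -> T -> \bar R) :=
  forall r : R, closed [set p : T * T | d p.1 p.2 <= r%:E].

Definition polish_topometric_group {T : topologicalType} (G : group_ops T)
  (d : T -> T -> \bar R) :=
  [/\ polish_group G, is_emetric d, bi_invariant G d, metric_refines d & lsc_metric d].

(* supremum metric on a product (0 is included so that the empty product
   gets the value 0; since all values are >= 0 this does not change the sup) *)
Definition sup_metric {I : Type} {T : I -> Type} (d : forall i, T i -> T i -> \bar R)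
  (x y : forall i, T i) : \bar R :=
  ereal_sup ([set 0] `|` range (fun i => d i (x i) (y i))).

Definition set_dist {U : Type} (dU : U -> U -> \bar R) (x : U) (C : set U) : \bar R :=
  ereal_inf [set dU x c | c in C].

Definition eps_nbhd {U : Type} (dU : U -> U -> \bar R) (C : set U) (eps : R) : set U :=
  [set h | set_dist dU h C < eps%:E].

Definition tm_ample_generics {T : topologicalType} (G : group_ops T)
  (d : T -> T -> \bar R) :=
  forall (n : nat) (eps : R), (0 < eps)%R ->
    exists g : power_space T n,
      @comeager (power_space T n) (eps_nbhd (sup_metric (fun _ : 'I_n => d)) (diag_conj_class G g) eps).

(* Main.v *)
Require Import Defs.
From HB Require Import structures.
From mathcomp Require Import all_boot all_order all_algebra.
From mathcomp Require Import all_classical all_reals all_analysis.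
From mathcomp Require Import Rstruct.
From mathcomp Require Import lra.
Set Implicit Arguments. Unset Strict Implicit. Unset Printing Implicit Defensive.
Import Order.TTheory GRing.Theory Num.Theory.
Local Open Scope classical_set_scope.
Local Open Scope ring_scope.


Section GenTop.
Context {T : topologicalType}.

Lemma nd_set0 : nowhere_dense (@set0 T).
Proof.
by rewrite /nowhere_dense closure0 interior0.
Qed.

Lemma nd_compl_open_dense (U : set T) : open U -> dense U -> nowhere_dense (~` U).
Proof.
move=> oU dU; rewrite /nowhere_dense -(closure_id _).1; last first.
  by rewrite closedC.
apply/seteqP; split => // x Ix.
have := dU (interior (~` U)) (ex_intro _ x Ix) (@open_interior _ _).
by case=> y [/interior_subset Hy Uy].
Qed.

Lemma nd_subset (A B : set T) : A `<=` B -> nowhere_dense B -> nowhere_dense A.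
Proof.
rewrite /nowhere_dense => AB HB; apply/seteqP; split => // x Ix.
by rewrite -HB; apply: (interiorS (closureS AB)).
Qed.

Lemma meager_inj (J : Type) (e : J -> nat) (F : J -> set T) :
  injective e -> (forall j, nowhere_dense (F j)) -> meager (\bigcup_j F j).
Proof.
move=> ie nF.
exists (fun m => \bigcup_(j in [set j | e j = m]) F j); split; last first.
  by move=> x [j _ Fx]; exists (e j) => //; exists j.
move=> m; have [[j ej]|] := pselect (exists j, e j = m).
  apply: (nd_subset _ (nF j)) => x [j' ej' Fx].
  by have <- : j' = j by apply: ie; rewrite ej ej'.
move=> nj; apply: (nd_subset _ nd_set0) => x [j ej _].
by apply: nj; exists j.
Qed.

Lemma comeager_opens (J : Type) (e : J -> nat) (U : J -> set T) (A : set T) :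
  injective e -> (forall j, open (U j) /\ dense (U j)) ->
  \bigcap_j U j `<=` A -> comeager A.
Proof.
move=> ie oU sA; rewrite /comeager.
have [F [nF sF]] := meager_inj ie (fun j => nd_compl_open_dense (oU j).1 (oU j).2).
exists F; split => // x nAx; apply: sF.
apply: contra_notP nAx => /= nU; apply: sA => j _.
by apply: contra_notP nU => nUj; exists j.
Qed.

Lemma comeager_opensE (A : set T) : comeager A ->
  exists U : nat -> set T, (forall k, open (U k) /\ dense (U k)) /\ \bigcap_k U k `<=` A.
Proof.
move=> [F [nF sF]]; exists (fun k => ~` closure (F k)); split.
  move=> k; split; first by apply: closed_openC; exact: closed_closure.
  move=> O [x Ox] oO.
  have [//|hO] := pselect (O `&` ~` closure (F k) !=set0).
  have : O `<=` interior (closure (F k)).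
    rewrite -((interior_id O).1 oO); apply: interiorS => y Oy.
    by apply: contra_notP hO => ncl; exists y; split.
  by move=> /(_ x Ox); rewrite (nF k).
move=> x Hx; have [//|nAx] := pselect (A x).
have [k _ Fkx] := sF x nAx; by case: (Hx k Logic.I); exact: subset_closure.
Qed.

End GenTop.


Lemma small_inv (e : R) : 0 < e -> exists N : nat, (N.+1%:R)^-1 < e.
Proof.
move=> e0; exists (Num.bound e^-1).
have ie : 0 <= e^-1 by rewrite invr_ge0 ltW.
have h := @archi_boundP R e^-1 ie.
set n : R := (Num.bound e^-1)%:R in h *.
have n0 : 0 <= n by rewrite /n.
rewrite -addn1 natrD /= -/n.
have h1 : 1 < n * e by rewrite -ltr_pdivrMr // div1r.
rewrite -[X in X < _]div1r ltr_pdivrMr ?ltr_wpDl //; nra.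
Qed.

Section Metric.
Context {T : topologicalType} (d : T -> T -> R).
Hypothesis dm : is_metric d.
Hypothesis dc : metric_compatible d.

Lemma d_ge0 x y : 0 <= d x y. Proof. by case: dm. Qed.
Lemma d_xx x : d x x = 0. Proof. by case: dm => _ h _ _; exact/h. Qed.
Lemma d_sym x y : d x y = d y x. Proof. by case: dm. Qed.
Lemma d_tri x y z : d x z <= d x y + d y z. Proof. by case: dm. Qed.

Lemma ball_open x r : open [set y | d x y < r].
Proof.
apply/dc => y /= hy; exists (r - d x y); split; first by rewrite subr_gt0.
move=> z /= hz; have := d_tri x y z; lra.
Qed.

Lemma ball_nbhs x r : 0 < r -> nbhs x [set y | d x y < r].
Proof. by move=> r0; apply: open_nbhs_nbhs; split; [exact: ball_open|rewrite /= d_xx]. Qed.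

Lemma open_ball (A : set T) x : open A -> A x -> exists e, 0 < e /\ [set y | d x y < e] `<=` A.
Proof. by move=> oA Ax; exact: (dc A).1 oA x Ax. Qed.

Lemma lim_le (u : nat -> T) x c r : u @ \oo --> x ->
  (exists N, forall m, (N <= m)%N -> d c (u m) < r) -> d c x <= r.
Proof.
move=> ux [N HN]; rewrite leNgt; apply/negP => hlt.
have hp : 0 < d c x - r by rewrite subr_gt0.
have := ux _ (ball_nbhs x hp).
move=> [M _ HM].
have := HM (maxn N M) (leq_maxr N M); rewrite /= => h2.
have := HN (maxn N M) (leq_maxl N M).
have := d_tri c (u (maxn N M)) x; rewrite (d_sym (u _) x); lra.
Qed.


Hypothesis dk : metric_complete d.

Lemma baire_step (U : set T) (c : T) (r : R) (k : nat) : open U -> dense U -> 0 < r ->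
  exists p : T * R, [/\ 0 < p.2, p.2 < (k.+1%:R)^-1, p.2 <= r &
     [set y | d p.1 y < p.2 + p.2] `<=` [set y | d c y < r] `&` U].
Proof.
move=> oU dU r0.
have [y [By Uy]] : [set y | d c y < r] `&` U !=set0.
  by apply: dU; [exists c; rewrite /= d_xx|exact: ball_open].
have oI : open ([set y | d c y < r] `&` U) by apply: openI => //; exact: ball_open.
have [e [e0 He]] := open_ball oI (conj By Uy).
have k0 : 0 < (k.+1%:R : R)^-1 by rewrite invr_gt0.
set m := Order.min e (Order.min r (k.+1%:R)^-1).
have me : m <= e by rewrite /m ge_min lexx.
have mr : m <= r by rewrite /m ge_min ge_min lexx orbT.
have mk : m <= (k.+1%:R)^-1 by rewrite /m ge_min ge_min lexx !orbT.
have m0 : 0 < m by rewrite /m lt_min e0 lt_min r0 k0.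
have m2 : m / 2 < m by lra.
exists (y, m / 2); split => /=.
- lra.
- exact: (lt_le_trans m2).
- exact: (le_trans (ltW m2)).
move=> z /= hz; apply: He => /=; lra.
Qed.

Lemma baire (x0 : T) (U : nat -> set T) : (forall k, open (U k) /\ dense (U k)) ->
  exists x, forall k, U k x.
Proof.
move=> oU.
have /choice [f Hf] : forall pk : (T * R) * nat, exists q : T * R, 0 < pk.1.2 ->
    [/\ 0 < q.2, q.2 < (pk.2.+1%:R)^-1, q.2 <= pk.1.2 &
     [set y | d q.1 y < q.2 + q.2] `<=` [set y | d pk.1.1 y < pk.1.2] `&` U pk.2].
  move=> [p k] /=; have [p0|np0] := ltP 0 p.2.
    by have [q Hq] := baire_step p.1 k (oU k).1 (oU k).2 p0; exists q.
  by exists p.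
pose fix s (k : nat) : T * R := if k is k'.+1 then f (s k', k') else (x0, 1).
have sS k : s k.+1 = f (s k, k) by [].
have pos k : 0 < (s k).2.
  by elim: k => [|k IH] /=; [exact: ltr01|case: (Hf (s k, k) IH)].
have step k := Hf (s k, k) (pos k).
have nest k m : (k <= m)%N -> [set y | d (s m).1 y < (s m).2] `<=` [set y | d (s k).1 y < (s k).2].
  elim: m => [|m IH]; first by rewrite leqn0 => /eqP ->.
  rewrite leq_eqVlt => /orP[/eqP -> //|]; rewrite ltnS => /IH h y hy; apply: h.
  case: (step m); rewrite -sS => p1 _ _ H.
  move: hy => /= hy.
  by have [] := H y ltac:(rewrite /=; lra).
have near k m : (k <= m)%N -> d (s k).1 (s m).1 < (s k).2.
  by move=> km; apply: (nest k m km); rewrite /= d_xx.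
have small k : (s k.+1).2 < (k.+1%:R)^-1 by case: (step k); rewrite -sS.
have cauchy : forall e : R, 0 < e -> exists N : nat, forall m n : nat,
    (N <= m)%N -> (N <= n)%N -> d (s m).1 (s n).1 < e.
  move=> e e0.
  have [N HN] := small_inv (divr_gt0 e0 (ltr0n R 2)).
  exists N.+1 => m n Nm Nn.
  have := near _ _ Nm; have := near _ _ Nn; have := small N.
  have := d_tri (s m).1 (s N.+1).1 (s n).1; rewrite (d_sym (s m).1 (s N.+1).1); have h1 : (s N.+1).2 < e / 2 := lt_trans (small N) HN. move: h1; lra.
have [x hx] := dk cauchy.
exists x => k.
case: (step k) => _ _ _ H; rewrite -sS in H.
have : d (s k.+1).1 x <= (s k.+1).2.
  by apply: (lim_le hx); exists k.+1 => m; exact: near.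
move=> hle; have /H [] // : d (s k.+1).1 x < (s k.+1).2 + (s k.+1).2.
by have := pos k.+1; lra.
Qed.

End Metric.

Definition pibase (T : topologicalType) :=
  exists (J : Type) (e : J -> nat) (B : J -> set T), [/\ injective e,
    (forall j, open (B j)) &
    (forall O, open O -> O !=set0 -> exists j, B j !=set0 /\ B j `<=` O)].

Definition baireP (T : topologicalType) :=
  forall U : nat -> set T, (forall k, open (U k) /\ dense (U k)) -> exists x, forall k, U k x.

Lemma polish_pibase (T : topologicalType) : polish_space T -> pibase T.
Proof.
move=> [[D [cD dD]] [d [dm dc _]]].
have /countable_injP [f finj] := cD.
exists ({c : T | D c} * nat)%type, (fun p => pickle (f (sval p.1), p.2)),
  (fun p => [set y | d (sval p.1) y < (p.2.+1%:R)^-1]); split.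
- move=> [[c Dc] k] [[c' Dc'] k'] /= /(pcan_inj (@pickleK _)) [/finj h ->].
  have ecc : c = c' by apply: h; rewrite in_setE.
  by subst c'; rewrite (Prop_irrelevance Dc Dc').
- by move=> p; exact: ball_open.
- move=> O oO [z Oz].
  have [r [r0 Hr]] := open_ball dc oO Oz.
  have [k Hk] := small_inv (divr_gt0 r0 (ltr0n R 2)).
  have k0 : 0 < (k.+1%:R : R)^-1 by rewrite invr_gt0.
  have [c [Bc Dc]] := dD _ (ex_intro _ z (ltac:(rewrite /= d_xx //) : [set y | d z y < (k.+1%:R)^-1] z)) (ball_open dm dc z _).
  exists (exist _ c Dc, k); split => /=.
    by exists c; rewrite /= d_xx.
  move=> y /= hy; apply: Hr => /=.
  have := d_tri dm z c y.
  have h1 : (k.+1%:R : R)^-1 < r / 2 := Hk.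
  have h2 : d z c < (k.+1%:R : R)^-1 := Bc.
  have h3 : d c y < (k.+1%:R : R)^-1 := hy.
  move: h1 h2 h3; move: ((k.+1%:R : R)^-1) => a; lra.
Qed.

Lemma polish_baire (T : topologicalType) (x0 : T) : polish_space T -> baireP T.
Proof. by move=> [_ [d [dm dc dk]]] U; exact: (@baire T d dm dc dk x0 U). Qed.


Lemma prod_cvg (I : Type) (K : I -> topologicalType) (F : set_system (prod_topology K))
  (x : prod_topology K) : Filter F -> (forall i, (fun f => f i) @ F --> x i) -> F --> x.
Proof.
move=> FF H.
have := @cvg_sup _ _ (fun i => Topological.class (initial_topology (fun f : (forall i, K i) => f i))) F x FF.
move=> [_ /(_ _) h]; apply: h => i A /=.
move=> [B [oB Bx] BA].
case: oB => B' oB' eB.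
apply: (filterS BA); rewrite -eB.
apply: (H i); apply: open_nbhs_nbhs; split => //.
by move: Bx; rewrite -eB.
Qed.

Lemma prod_continuous (X : topologicalType) (I : Type) (K : I -> topologicalType)
  (f : X -> prod_topology K) : (forall i, continuous (fun x => f x i)) -> continuous f.
Proof. by move=> H x; apply: prod_cvg => i; exact: H. Qed.

Lemma projc (I : Type) (K : I -> topologicalType) (i : I) :
  continuous (fun f : prod_topology K => f i).
Proof. exact: (@proj_continuous {classic I} K i). Qed.

Lemma nbhsS (T : topologicalType) (x : T) (P Q : set T) : P `<=` Q -> nbhs x P -> nbhs x Q.
Proof. by move=> PQ; apply: filterS. Qed.
Lemma nbhsI (T : topologicalType) (x : T) (P Q : set T) : nbhs x P -> nbhs x Q -> nbhs x (P `&` Q).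
Proof. exact: filterI. Qed.
Lemma nbhsT (T : topologicalType) (x : T) (P : set T) : (forall y, P y) -> nbhs x P.
Proof. by move=> H; apply: nbhsS (filterT) => y _; exact: H. Qed.


Definition m1 (t : R) : R := Num.min 1 t.

Lemma m1_ge0 t : 0 <= t -> 0 <= m1 t.
Proof. by move=> t0; rewrite /m1 le_min ler01 t0. Qed.
Lemma m1_le1 t : m1 t <= 1. Proof. by rewrite /m1 ge_min lexx. Qed.
Lemma m1_le t : m1 t <= t. Proof. by rewrite /m1 ge_min lexx orbT. Qed.
Lemma m1_1 t : 1 <= t -> m1 t = 1. Proof. by move=> h; apply: min_l. Qed.
Lemma m1_id t : t <= 1 -> m1 t = t. Proof. by move=> h; apply: min_r. Qed.

Lemma m1_sub a b c : 0 <= b -> 0 <= c -> a <= b + c -> m1 a <= m1 b + m1 c.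
Proof.
move=> b0 c0 abc.
have ha := m1_le1 a; have hb := m1_ge0 b0; have hc := m1_ge0 c0; have ha' := m1_le a.
have [b1|b1] := leP 1 b; first by rewrite (m1_1 b1); lra.
have [c1|c1] := leP 1 c; first by rewrite (m1_1 c1); lra.
rewrite (m1_id (ltW b1)) (m1_id (ltW c1)); lra.
Qed.
Lemma m1_mono a b : a <= b -> m1 a <= m1 b.
Proof.
move=> ab; have [a1|a1] := leP 1 a.
  by rewrite (m1_1 a1) (m1_1 (le_trans a1 ab)).
rewrite (m1_id (ltW a1)) /m1 le_min ab andbT; exact: ltW.
Qed.
Lemma m1_small a r : 0 < r -> m1 a < m1 r -> a < r.
Proof. by move=> r0 h; rewrite ltNge; apply/negP => /m1_mono; rewrite leNgt h. Qed.
Lemma m1_pos r : 0 < r -> 0 < m1 r.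
Proof. by move=> r0; rewrite /m1 lt_min ltr01 r0. Qed.

Lemma pow2_gt0 k : 0 < (2 ^+ k : R). Proof. by rewrite exprn_gt0. Qed.

Lemma small_pow (r : R) : 0 < r -> exists N : nat, (2 ^+ N : R)^-1 < r.
Proof.
move=> r0; have [N HN] := small_inv r0; exists N.
apply: le_lt_trans HN; rewrite lef_pV2 ?posrE ?pow2_gt0 //.
rewrite -natrX ler_nat; exact: ltn_expl.
Qed.

Lemma pow2_anti m n : (m <= n)%N -> (2 ^+ n : R)^-1 <= (2 ^+ m)^-1.
Proof.
by move=> mn; rewrite lef_pV2 ?posrE ?pow2_gt0 // ler_eXn2l // ltr1n.
Qed.

Lemma d_xx_eq (T : Type) (d : T -> T -> R) : is_metric d -> forall x y, d x y = 0 -> x = y.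
Proof. by case=> _ h _ _ x y /h. Qed.

Section ProdMetric.
Local Unset Implicit Arguments.
Variables (I : Type) (K : I -> topologicalType) (dd : forall i, K i -> K i -> R) (e : I -> nat).
Hypothesis dm : forall i, is_metric (dd i).
Hypothesis dc : forall i, metric_compatible (dd i).
Hypothesis ie : injective e.

Definition wt i (x y : prod_topology K) : R := m1 (dd i (x i) (y i)) / 2 ^+ e i.
Definition pS x y : set R := [set 0] `|` range (fun i => wt i x y).
Definition pd (x y : prod_topology K) : R := sup (pS x y).

Lemma wt_ge0 i x y : 0 <= wt i x y.
Proof. by rewrite /wt divr_ge0 ?m1_ge0 ?(d_ge0 (dm i)) // ltW ?pow2_gt0. Qed.

Lemma wt_le i x y : wt i x y <= (2 ^+ e i)^-1.
Proof. by rewrite /wt ler_pdivrMr ?pow2_gt0 // mulVf ?gt_eqF ?pow2_gt0 // m1_le1. Qed.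

Lemma pS_ub x y : ubound (pS x y) 1.
Proof.
move=> t [->|[i _ <-]]; first exact: ler01.
apply: le_trans (wt_le i x y) _; rewrite invf_le1 ?pow2_gt0 //.
by rewrite -natrX ler1n expn_gt0.
Qed.

Lemma pd_ge_wt i x y : wt i x y <= pd x y.
Proof. by apply: ub_le_sup; [exists 1; exact: pS_ub|right; exists i]. Qed.

Lemma pd_ge0 x y : 0 <= pd x y.
Proof. by apply: ub_le_sup; [exists 1; exact: pS_ub|left]. Qed.

Lemma pd_le x y c : 0 <= c -> (forall i, wt i x y <= c) -> pd x y <= c.
Proof. by move=> c0 H; apply: ge_sup; [exists 0; left|move=> t [->|[i _ <-]]]. Qed.

Lemma wt_small i x y r : 0 < r -> wt i x y < m1 r / 2 ^+ e i -> dd i (x i) (y i) < r.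
Proof.
move=> r0; rewrite /wt ltr_pM2r ?invr_gt0 ?pow2_gt0 //; exact: m1_small.
Qed.


Lemma wt_xx i x : wt i x x = 0.
Proof. by rewrite /wt d_xx // m1_id ?ler01 // mul0r. Qed.

Lemma wt_sym i x y : wt i x y = wt i y x.
Proof. by rewrite /wt d_sym. Qed.

Lemma wt_tri i x y z : wt i x z <= wt i x y + wt i y z.
Proof.
rewrite /wt -mulrDl ler_pM2r ?invr_gt0 ?pow2_gt0 //.
by apply: m1_sub; rewrite ?(d_ge0 (dm i)) //; exact: d_tri.
Qed.

Lemma pd_metric : is_metric pd.
Proof.
split.
- exact: pd_ge0.
- move=> x y; split => [h|->]; last first.
    by apply/eqP; rewrite eq_le pd_ge0 andbT; apply: pd_le => // i; rewrite wt_xx.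
  apply: functional_extensionality_dep => i.
  have h1 := pd_ge_wt i x y; rewrite h in h1.
  have h2 : m1 (dd i (x i) (y i)) <= 0.
    by move: h1; rewrite /wt pmulr_lle0 // invr_gt0 pow2_gt0.
  have h0 := d_ge0 (dm i) (x i) (y i).
  have [t1|t1] := leP 1 (dd i (x i) (y i)).
    by move: h2; rewrite m1_1 // => h3; have := @ltr01 R; rewrite ltNge h3.
  move: h2; rewrite (m1_id (ltW t1)) => h3.
  by apply: (d_xx_eq (dm i)); apply: le_anti; rewrite h3 h0.
- move=> x y; rewrite /pd /pS.
  have -> : (fun i => wt i x y) = (fun i => wt i y x) by apply: funext => i; exact: wt_sym.
  by [].
- move=> x y z; apply: pd_le; first by rewrite addr_ge0 ?pd_ge0.
  move=> i; apply: le_trans (wt_tri i x y z) _.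
  by apply: lerD; exact: pd_ge_wt.
Qed.


Lemma wt_le_m1 i x y : wt i x y <= m1 (dd i (x i) (y i)).
Proof.
rewrite /wt ler_pdivrMr ?pow2_gt0 // ler_peMr ?m1_ge0 ?(d_ge0 (dm i)) //.
by rewrite -natrX ler1n expn_gt0.
Qed.

Lemma box_nbhs (x : prod_topology K) N rho : 0 < rho ->
  nbhs x [set y | forall i, (e i < N)%N -> dd i (x i) (y i) < rho].
Proof.
move=> r0; elim: N => [|N IH].
  by apply: nbhsT => y i.
have H2 : nbhs x [set y | forall i, e i = N -> dd i (x i) (y i) < rho].
  have [[i0 ei0]|ne] := pselect (exists i, e i = N); last first.
    by apply: nbhsT => y i ei; exfalso; apply: ne; exists i.
  have : nbhs x ((fun f : prod_topology K => f i0) @^-1` [set z | dd i0 (x i0) z < rho]).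
    exact: (@projc I K i0 x _ (ball_nbhs (dm i0) (dc i0) (x i0) r0)).
  apply: nbhsS => y /= hy i ei; have ii0 : i = i0 by apply: ie; rewrite ei ei0.
  by subst i.
apply: (nbhsS _ (nbhsI IH H2)) => y [h1 h2] i; rewrite ltnS leq_eqVlt => /orP[/eqP h|h].
  exact: h2.
exact: h1.
Qed.

Lemma pd_ball_nbhs (x : prod_topology K) r : 0 < r -> nbhs x [set y | pd x y < r].
Proof.
move=> r0; have r2 : 0 < r / 2 by lra.
have [N HN] := small_pow r2.
apply: (nbhsS _ (box_nbhs x N (r / 2) r2)) => y /= hy.
have : pd x y <= r / 2; last by lra.
apply: pd_le; first exact: ltW.
move=> i; have [eN|eN] := ltnP (e i) N.
  apply: le_trans (wt_le_m1 i x y) _; apply: le_trans (m1_le _) _; exact: ltW (hy i eN).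
apply: le_trans (wt_le i x y) _; apply: le_trans (pow2_anti eN) _; exact: ltW.
Qed.

Lemma pd_compatible : metric_compatible pd.
Proof.
move=> A; split; last first.
  move=> H; rewrite openE => x Ax; have [r [r0 sr]] := H x Ax.
  change (nbhs x A); exact: nbhsS sr (pd_ball_nbhs x r r0).
move=> oA x Ax.
pose F := filter_from [set r : R | 0 < r] (fun r => [set y | pd x y < r]).
have FF : Filter F.
  apply: filter_from_filter; first by exists 1; exact: ltr01.
  move=> r1 r2 /= h1 h2; exists (Num.min r1 r2); first by rewrite /= lt_min h1 h2.
  by move=> y /= hy; split; apply: lt_le_trans hy _; rewrite ge_min lexx ?orbT.
have Fx : F --> x.
  apply: prod_cvg => i B; rewrite nbhsE => -[Op [oOp Opx] OpB].
  have [rho [rho0 HO]] := (dc i Op).1 oOp (x i) Opx.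
  exists (m1 rho / 2 ^+ e i); first by rewrite /= divr_gt0 ?m1_pos ?pow2_gt0.
  move=> y /= hy; apply: OpB; apply: HO => /=; apply: (wt_small i x y rho rho0).
  exact: le_lt_trans (pd_ge_wt i x y) hy.
have : F A by apply: Fx; apply: open_nbhs_nbhs.
by move=> [r r0 sr]; exists r.
Qed.


Lemma pd_complete : (forall i, metric_complete (dd i)) -> metric_complete pd.
Proof.
move=> dk u Hu.
have Hi : forall i, exists xi : K i, (fun m => u m i) @ \oo --> xi.
  move=> i; have Hc : forall eps : R, 0 < eps -> exists N : nat, forall m n : nat,
      (N <= m)%N -> (N <= n)%N -> dd i (u m i) (u n i) < eps.
    move=> eps eps0.
    have [N HN] := Hu (m1 eps / 2 ^+ e i) (divr_gt0 (m1_pos eps0) (pow2_gt0 _)).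
    exists N => m n Nm Nn; apply: (wt_small i (u m) (u n) eps eps0).
    exact: le_lt_trans (pd_ge_wt i (u m) (u n)) (HN m n Nm Nn).
  exact: (dk i _ Hc).
exists (fun i => sval (cid (Hi i))).
apply: prod_cvg => i; exact: (svalP (cid (Hi i))).
Qed.

Lemma pd_separable (a : forall i, K i) (DD : forall i, set (K i)) :
  (forall i, countable (DD i)) -> (forall i, dense (DD i)) ->
  separable_space (prod_topology K).
Proof.
move=> cD dD.
have Hf : forall i, exists f : K i -> nat, {in DD i &, injective f}.
  by move=> i; apply/countable_injP.
pose f i := sval (cid (Hf i)).
have fi i : {in DD i &, injective (f i)} := svalP (cid (Hf i)).
pose enum i (n : nat) : K i :=
  if pselect (exists c, DD i c /\ f i c = n) is left h then sval (cid h) else a i.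
have enumE i c : DD i c -> enum i (f i c) = c.
  move=> Dc; rewrite /enum; case: pselect => [h|]; last first.
    by move=> nh; exfalso; apply: nh; exists c.
  case: (cid h) => c' [Dc' fc] /=; apply: (fi i); rewrite ?in_setE //.
pose g (l : seq nat) : prod_topology K :=
  fun i => if (e i < size l)%N then enum i (nth 0%N l (e i)) else a i.
exists (range g); split.
  apply: (sub_countable (card_image_le g setT)); exact: countableP.
move=> O [z Oz] oO.
have [r [r0 Hr]] := (pd_compatible O).1 oO z Oz.
have r2 : 0 < r / 2 by lra.
have [N HN] := small_pow r2.
have /choice [n Hn] : forall i, exists k : nat, dd i (z i) (enum i k) < r / 2.
  move=> i; have [c [Bc Dc]] := dD i _ (ex_intro _ (z i)
     (ltac:(rewrite /= d_xx //) : [set y | dd i (z i) y < r / 2] (z i))) (ball_open (dm i) (dc i) _ _).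
  by exists (f i c); rewrite enumE.
pose l := mkseq (fun k => if pselect (exists i, e i = k) is left h then n (sval (cid h)) else 0%N) N.
have gl i : (e i < N)%N -> g l i = enum i (n i).
  move=> eN; rewrite /g size_mkseq eN nth_mkseq //.
  case: pselect => [h|nh]; last by exfalso; apply: nh; exists i.
  by case: (cid h) => j /= /ie ->.
have gl2 i : ~ (e i < N)%N -> g l i = a i.
  by move=> eN; rewrite /g size_mkseq; case: ifP.
exists (g l); split; last by exists l.
apply: Hr => /=.
have : pd z (g l) <= r / 2; last by lra.
apply: pd_le; first exact: ltW.
move=> i; have [eN|eN] := ltnP (e i) N.
  apply: le_trans (wt_le_m1 i z (g l)) _; apply: le_trans (m1_le _) _.
  by rewrite gl //; exact: ltW.
apply: le_trans (wt_le i z (g l)) _; apply: le_trans (pow2_anti eN) _; exact: ltW.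
Qed.

End ProdMetric.

Lemma polish_prod (I : Type) (K : I -> topologicalType) (a : forall i, K i) :
  countable [set: I] -> (forall i, polish_space (K i)) -> polish_space (prod_topology K).
Proof.
move=> cI HP.
have /countable_injP [e0 ie0] := cI.
have ie : injective e0 by move=> x y h; apply: ie0; rewrite ?in_setE.
pose dd i := sval (cid (HP i).2).
have ddP i : [/\ is_metric (dd i), metric_compatible (dd i) & metric_complete (dd i)].
  exact: svalP (cid (HP i).2).
pose DD i := sval (cid (HP i).1).
have DDP i : countable (DD i) /\ dense (DD i) := svalP (cid (HP i).1).
have dm i : is_metric (dd i) by case: (ddP i).
have dc i : metric_compatible (dd i) by case: (ddP i).
have dk i : metric_complete (dd i) by case: (ddP i).
split.
  exact: (@pd_separable I K dd e0 dm dc ie a DD (fun i => (DDP i).1) (fun i => (DDP i).2)).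
exists (@pd I K dd e0); split.
- exact: (@pd_metric I K dd e0 dm).
- exact: (@pd_compatible I K dd e0 dm dc ie).
- exact: pd_complete.
Qed.


Lemma KU (X Z : topologicalType) (s : X -> Z -> Z) :
  pibase Z -> baireP Z ->
  (forall y, continuous (s ^~ y)) -> (forall x, continuous (s x)) ->
  (forall (W : set X) (V : set Z), open W -> W !=set0 -> open V -> V !=set0 ->
     exists M, [/\ open M, M !=set0 & M `<=` [set z | exists x y, [/\ W x, V y & z = s x y]]]) ->
  forall A, comeager A -> comeager [set x | exists y, A (s x y)].
Proof.
move=> [J [e [B [ie oB pB]]]] bZ cs1 cs2 HM A /comeager_opensE [U [oU sU]].
pose O (p : nat * J) := [set x | B p.2 !=set0 -> exists y, B p.2 y /\ U p.1 (s x y)].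
apply: (@comeager_opens _ _ (fun p => pickle (p.1, e p.2)) O).
- move=> [k j] [k' j'] /= /(pcan_inj (@pickleK _)) [-> /ie ->] //.
- move=> [k j]; split.
    have [Bne|Be] := pselect (B j !=set0).
      have -> : O (k, j) = \bigcup_(y in B j) ((s ^~ y) @^-1` (U k)).
        apply/seteqP; split => x /=.
          by move=> /(_ Bne) [y [By Uy]]; exists y.
        by move=> [y By Uy] _; exists y.
      apply: bigcup_open => y _; exact: (continuousP _).1 (cs1 y) _ (oU k).1.
    have -> : O (k, j) = setT by apply/seteqP; split => // x _ /= /Be.
    exact: openT.
  move=> W [w Ww] oW.
  have [Bne|Be] := pselect (B j !=set0); last by exists w; split => //= /Be.
  have [M [oM [m Mm] sM]] := HM W (B j) oW (ex_intro _ w Ww) (oB j) Bne.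
  have [z [Mz Uz]] := (oU k).2 M (ex_intro _ m Mm) oM.
  have [x [y [Wx By ez]]] := sM z Mz; subst z.
  by exists x; split => // _; exists y.
- move=> x Ox.
  have Vd : forall k, open [set y | U k (s x y)] /\ dense [set y | U k (s x y)].
    move=> k; split; first exact: ((continuousP _).1 (cs2 x) _ (oU k).1).
    move=> Op [q Opq] oOp.
    have [j [Bj sBj]] := pB Op oOp (ex_intro _ q Opq).
    have [y [By Uy]] := Ox (k, j) Logic.I Bj.
    by exists y; split => //; exact: sBj.
  have [y Hy] := bZ _ Vd.
  by exists y; apply: sU => k _; exact: Hy.
Qed.


Definition swapin {I : Type} {T : I -> Type} (i0 : I) (f : forall i, T i) (a : T i0) :
  forall i, T i := @dfwith {classic I} T f i0 a.
Arguments swapin {I T} i0 f a _.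

Lemma swapin_in {I : Type} {T : I -> Type} (i0 : I) (f : forall i, T i) (a : T i0) :
  swapin i0 f a i0 = a.
Proof. exact: (@dfwithin {classic I} T f i0 a). Qed.

Lemma swapin_out {I : Type} {T : I -> Type} (i0 : I) (f : forall i, T i) (a : T i0) i :
  i0 <> i -> swapin i0 f a i = f i.
Proof. by move=> h; apply: (@dfwithout {classic I} T f i0 a); apply/eqP. Qed.

Lemma swapin_ext {I : Type} {T : I -> Type} (i0 : I) (f g : forall i, T i) :
  f i0 = g i0 -> (forall i, i0 <> i -> f i = g i) -> f = g.
Proof.
move=> h0 h; apply: functional_extensionality_dep => i.
have [<-|ni] := pselect (i0 = i); [exact: h0|exact: h].
Qed.

Lemma swapin_self {I : Type} {T : I -> Type} (i0 : I) (f : forall i, T i) :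
  swapin i0 f (f i0) = f.
Proof.
apply: (@swapin_ext I T i0); first by rewrite swapin_in.
by move=> i ni; rewrite swapin_out.
Qed.

Lemma swapin_twice {I : Type} {T : I -> Type} (i0 : I) (f : forall i, T i) (a b : T i0) :
  swapin i0 (swapin i0 f a) b = swapin i0 f b.
Proof.
apply: (@swapin_ext I T i0); first by rewrite !swapin_in.
by move=> i ni; rewrite !swapin_out.
Qed.

Lemma swapin_cont1 {I : Type} {K : I -> topologicalType} (i0 : I) (f : prod_topology K) :
  continuous (fun a : K i0 => (swapin i0 f a : prod_topology K)).
Proof. exact: (@dfwith_continuous {classic I} K f i0). Qed.

Lemma swapin_cont2 {I : Type} {K : I -> topologicalType} (i0 : I) (a : K i0) :
  continuous (fun f : prod_topology K => (swapin i0 f a : prod_topology K)).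
Proof.
apply: prod_continuous => j.
have [ij|nij] := pselect (i0 = j).
  subst j; have -> : (fun f : prod_topology K => swapin i0 f a i0) = (fun _ => a).
    by apply: funext => f; rewrite swapin_in.
  exact: cst_continuous.
have -> : (fun f : prod_topology K => swapin i0 f a j) = (fun f => f j).
  by apply: funext => f; rewrite swapin_out.
exact: projc.
Qed.

Lemma comp_cont (X Y Z : topologicalType) (f : X -> Y) (g : Y -> Z) :
  continuous f -> continuous g -> continuous (fun x => g (f x)).
Proof. by move=> cf cg x; apply: cvg_comp (cf x) (cg (f x)). Qed.

Lemma comeager_sub (T : topologicalType) (A B : set T) : A `<=` B -> comeager A -> comeager B.
Proof.
move=> AB [F [nF sF]]; exists F; split => // x nBx; apply: sF => Ax; exact: nBx (AB x Ax).
Qed.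

Section Structure.
Local Unset Implicit Arguments.
Variables (I : Type) (T : I -> topologicalType) (n : nat) (i0 : I).

Local Notation Z := (power_space (prod_topology T) n).
Local Notation X := (power_space (T i0) n).

Definition pr (z : Z) : X := fun k => z k i0.
Definition sw (x : X) (y : Z) : Z := fun k => swapin i0 (y k) (x k).

Lemma pr_sw x y : pr (sw x y) = x.
Proof. by apply: funext => k; rewrite /pr /sw swapin_in. Qed.

Lemma sw_pr z : sw (pr z) z = z.
Proof. by apply: funext => k; rewrite /pr /sw swapin_self. Qed.

Lemma sw_sw x x' y : sw x (sw x' y) = sw x y.
Proof. by apply: funext => k; rewrite /sw swapin_twice. Qed.

Lemma pr_cont : continuous pr.
Proof.
apply: prod_continuous => k.
exact: (comp_cont (@projc _ _ k) (@projc _ _ i0)).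
Qed.

Lemma sw_cont1 y : continuous (sw ^~ y).
Proof.
apply: prod_continuous => k.
have h1 : continuous (fun x : X => x k) := @projc 'I_n (fun _ => T i0) k.
have h2 := @swapin_cont1 I T i0 (y k).
exact: (comp_cont h1 h2).
Qed.

Lemma sw_cont2 x : continuous (sw x).
Proof.
apply: prod_continuous => k.
have h1 : continuous (fun z : Z => z k) := @projc 'I_n (fun _ => prod_topology T) k.
have h2 := @swapin_cont2 I T i0 (x k).
exact: (comp_cont h1 h2).
Qed.

Lemma sw_M (W : set X) (V : set Z) : open W -> W !=set0 -> open V -> V !=set0 ->
  exists M, [/\ open M, M !=set0 & M `<=` [set z | exists x y, [/\ W x, V y & z = sw x y]]].
Proof.
move=> oW [w0 Ww0] oV [y0 Vy0].
exists ([set z | W (pr z)] `&` [set z | V (sw (pr y0) z)]); split.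
- apply: openI.
    exact: (continuousP _).1 pr_cont _ oW.
  exact: (continuousP _).1 (sw_cont2 (pr y0)) _ oV.
- exists (sw w0 y0); split => /=; first by rewrite pr_sw.
  by rewrite sw_sw sw_pr.
- move=> z [Wz Vz]; exists (pr z), (sw (pr y0) z); split => //.
  by rewrite sw_sw sw_pr.
Qed.

Lemma pr_dense (U : set X) : open U -> dense U -> dense (pr @^-1` U).
Proof.
move=> oU dU O [z Oz] oO.
have oO' : open [set w | O (sw w z)] := (continuousP _).1 (sw_cont1 z) _ oO.
have [w [Ow Uw]] := dU _ (ex_intro _ (pr z) (ltac:(by rewrite /= sw_pr) : [set w | O (sw w z)] (pr z))) oO'.
by exists (sw w z); split => //=; rewrite pr_sw.
Qed.

End Structure.


Lemma polishZ (I : Type) (T : I -> topologicalType) (a : forall i, T i) (n : nat) :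
  countable [set: I] -> (forall i, polish_space (T i)) ->
  polish_space (power_space (prod_topology T) n).
Proof.
move=> cI HP; have PT := polish_prod a cI HP.
exact: (@polish_prod 'I_n (fun _ => prod_topology T) (fun _ => a) (countableP _) (fun _ => PT)).
Qed.

Lemma inj_of_countable (I : Type) : countable [set: I] -> exists e : I -> nat, injective e.
Proof.
move=> /countable_injP [e ie]; exists e => x y h; apply: ie; rewrite ?in_setE //.
Qed.

Lemma pair_inj (I : Type) (e : I -> nat) : injective e ->
  injective (fun p : I * nat => pickle (e p.1, p.2)).
Proof. by move=> ie [a b] [c d] /= /(pcan_inj (@pickleK _)) [/ie -> ->]. Qed.

Lemma conj_prod (I : Type) (T : I -> Type) (G : forall i, group_ops (T i))
  (k g : forall i, T i) i :
  conj_by (prod_group_ops G) k g i = conj_by (G i) (k i) (g i).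
Proof. by []. Qed.

Theorem part1 (I : Type) (T : I -> topologicalType) (G : forall i, group_ops (T i)) :
  countable [set: I] -> (forall i, polish_group (G i)) ->
  (ample_generics (T := prod_topology T) (prod_group_ops G) <->
   forall i, ample_generics (G i)).
Proof.
move=> cI HP.
have PT i : polish_space (T i) by case: (HP i).
have PZ n := polishZ (fun i => gone (G i)) n cI PT.
split.
- move=> H i0 n; have [g Cg] := H n.
  exists (@pr I T n i0 g).
  have := @KU _ _ (@sw I T n i0) (polish_pibase (PZ n))
    (@polish_baire (power_space (prod_topology T) n) (fun _ => fun i => gone (G i)) (PZ n))
    (@sw_cont1 I T n i0) (@sw_cont2 I T n i0) (@sw_M I T n i0) _ Cg.
  apply: comeager_sub => x [y [kk Hy]].
  exists (kk i0); rewrite -(@pr_sw I T n i0 x y) Hy.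
  by apply: funext => k.
- move=> H n.
  pose gi i := sval (cid (H i n)).
  have Cgi i : comeager (diag_conj_class (G i) (gi i)) := svalP (cid (H i n)).
  pose Ui i := sval (cid (comeager_opensE (Cgi i))).
  have HUi i : (forall k, open (Ui i k) /\ dense (Ui i k)) /\
      \bigcap_k Ui i k `<=` diag_conj_class (G i) (gi i).
    exact: svalP (cid (comeager_opensE (Cgi i))).
  have [e ie] := inj_of_countable cI.
  exists (fun k i => gi i k).
  apply: (comeager_opens (pair_inj ie)
     (U := fun p : I * nat => @pr I T n p.1 @^-1` (Ui p.1 p.2))).
    move=> [i m] /=; split.
      exact: (continuousP _).1 (@pr_cont I T n i) _ ((HUi i).1 m).1.
    exact: (@pr_dense I T n i) ((HUi i).1 m).1 ((HUi i).1 m).2.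
  move=> z Hz.
  have Hc i : diag_conj_class (G i) (gi i) (@pr I T n i z).
    by apply: (HUi i).2 => m _; exact: (Hz (i, m)).
  pose c i := sval (cid (Hc i)).
  have Hcc i : @pr I T n i z = (fun k => conj_by (G i) (c i) (gi i k)) := svalP (cid (Hc i)).
  exists c; apply: funext => k; apply: functional_extensionality_dep => i.
  by rewrite conj_prod /=; have := congr1 (fun f => f k) (Hcc i).
Qed.

Section ERealHelpers.
Local Open Scope ereal_scope.

Lemma sup_metric_le (I : Type) (T : I -> Type) (d : forall i, T i -> T i -> \bar R)
  (x y : forall i, T i) (M : \bar R) :
  0 <= M -> (forall i, d i (x i) (y i) <= M) -> sup_metric d x y <= M.
Proof. by move=> M0 H; apply: ge_ereal_sup => t [->|[i _ <-]]. Qed.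

Lemma sup_metric_ge (I : Type) (T : I -> Type) (d : forall i, T i -> T i -> \bar R)
  (x y : forall i, T i) i : d i (x i) (y i) <= sup_metric d x y.
Proof. by apply: ereal_sup_ubound; right; exists i. Qed.

Lemma sup_metric_ge0 (I : Type) (T : I -> Type) (d : forall i, T i -> T i -> \bar R)
  (x y : forall i, T i) : 0 <= sup_metric d x y.
Proof. by apply: ereal_sup_ubound; left. Qed.

Lemma set_dist_lt (U : Type) (dU : U -> U -> \bar R) x C (eps : R) :
  set_dist dU x C < eps%:E -> exists c, C c /\ dU x c < eps%:E.
Proof. by move=> /ereal_inf_lt [_ [c Cc <-] h]; exists c. Qed.

Lemma set_dist_le (U : Type) (dU : U -> U -> \bar R) x (C : set U) c :
  C c -> set_dist dU x C <= dU x c.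
Proof. by move=> Cc; apply: ereal_inf_lbound; exists c. Qed.

End ERealHelpers.

Theorem part2 (I : Type) (T : I -> topologicalType) (G : forall i, group_ops (T i))
  (d : forall i, T i -> T i -> \bar R) :
  countable [set: I] -> (forall i, polish_topometric_group (G i) (d i)) ->
  (tm_ample_generics (T := prod_topology T) (prod_group_ops G) (sup_metric d) <->
   forall i, tm_ample_generics (G i) (d i)).
Proof.
move=> cI HP.
have PT i : polish_space (T i) by case: (HP i) => -[].
have PZ n := polishZ (fun i => gone (G i)) n cI PT.
split.
- move=> H i0 n eps eps0; have [g Cg] := H n eps eps0.
  exists (@pr I T n i0 g).
  have := @KU _ _ (@sw I T n i0) (polish_pibase (PZ n))
    (@polish_baire (power_space (prod_topology T) n) (fun _ => fun i => gone (G i)) (PZ n))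
    (@sw_cont1 I T n i0) (@sw_cont2 I T n i0) (@sw_M I T n i0) _ Cg.
  apply: comeager_sub => x [y Hy]; have [c [[kk ec] hc]] := set_dist_lt Hy.
  rewrite /eps_nbhd /=.
  apply: (le_lt_trans _ hc).
  apply: (le_trans (set_dist_le _ _ (c := @pr I T n i0 c) _)).
    by exists (kk i0); apply: funext => k; rewrite /pr ec.
  apply: sup_metric_le; first exact: sup_metric_ge0.
  move=> k; apply: le_trans (sup_metric_ge _ _ _ k).
  have -> : x k = @sw I T n i0 x y k i0 by rewrite /sw swapin_in.
  exact: (sup_metric_ge d (@sw I T n i0 x y k) (c k) i0).
- move=> H n eps eps0.
  have eps2 : (0 < eps / 2)%R by rewrite divr_gt0.
  pose gi i := sval (cid (H i n _ eps2)).
  have Cgi i : @comeager (power_space (T i) n) (eps_nbhd (sup_metric (fun _ : 'I_n => d i))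
      (diag_conj_class (G i) (gi i)) (eps / 2)) := svalP (cid (H i n _ eps2)).
  pose Ui i := sval (cid (comeager_opensE (Cgi i))).
  have HUi i : (forall k, open (Ui i k) /\ dense (Ui i k)) /\
      \bigcap_k Ui i k `<=` eps_nbhd (sup_metric (fun _ : 'I_n => d i))
      (diag_conj_class (G i) (gi i)) (eps / 2).
    exact: svalP (cid (comeager_opensE (Cgi i))).
  have [e ie] := inj_of_countable cI.
  exists (fun k i => gi i k).
  apply: (comeager_opens (pair_inj ie)
     (U := fun p : I * nat => @pr I T n p.1 @^-1` (Ui p.1 p.2))).
    move=> [i m] /=; split.
      exact: (continuousP _).1 (@pr_cont I T n i) _ ((HUi i).1 m).1.
    exact: (@pr_dense I T n i) ((HUi i).1 m).1 ((HUi i).1 m).2.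
  move=> z Hz.
  have Hc i : exists kk : T i, (sup_metric (fun _ : 'I_n => d i) (@pr I T n i z)
        (fun k => conj_by (G i) kk (gi i k)) < (eps / 2)%:E)%E.
    have : eps_nbhd (sup_metric (fun _ : 'I_n => d i))
      (diag_conj_class (G i) (gi i)) (eps / 2) (@pr I T n i z).
      by apply: (HUi i).2 => m _; exact: (Hz (i, m)).
    by move=> Hy; have [c [[kk ec] hc]] := set_dist_lt Hy; exists kk; rewrite -ec.
  pose c i := sval (cid (Hc i)).
  have Hcc i := svalP (cid (Hc i)).
  rewrite /eps_nbhd /=.
  have lt2 : ((eps / 2)%:E < eps%:E)%E by rewrite lte_fin; lra.
  apply: le_lt_trans lt2.
  apply: (le_trans (set_dist_le _ _ (c := fun k => conj_by (prod_group_ops G) c (fun i => gi i k)) _)).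
    by exists c.
  apply: sup_metric_le; first by rewrite lee_fin ltW.
  move=> k; apply: sup_metric_le; first by rewrite lee_fin ltW.
  move=> i; rewrite conj_prod.
  apply: le_trans (ltW (Hcc i)).
  exact: (sup_metric_ge (fun _ : 'I_n => d i) (@pr I T n i z) _ k).
Qed.


Local Close Scope ring_scope.

Theorem proposition6p4 :
  (forall (I : Type) (T : I -> topologicalType) (G : forall i, group_ops (T i)),
      countable [set: I] ->
      (forall i, polish_group (G i)) ->
      (ample_generics (T := prod_topology T) (prod_group_ops G) <->
       forall i, ample_generics (G i)))
  /\
  (forall (I : Type) (T : I -> topologicalType) (G : forall i, group_ops (T i))
          (d : forall i, T i -> T i -> \bar R),
      countable [set: I] ->
      (forall i, polish_topometric_group (G i) (d i)) ->
      (tm_ample_generics (T := prod_topology T) (prod_group_ops G) (sup_metric d) <->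
       forall i, tm_ample_generics (G i) (d i))).
Proof.
split.
- move=> I T G cI HP; exact: part1.
- move=> I T G d cI HP; exact: part2.
Qed.
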